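(* Let $0<\alpha<2$, $\alpha\neq 1$ or $\alpha=1$, let $\beta\in[-1,1]$, let $d\ge 1$ be an integer and $v\in\mathbb{R}$. Let $g_{\alpha,d}(v,\beta)$, $\beta_B$, $\theta_B$ and $h^{n}(\cdot\,;\alpha,\beta)$ be as defined in the context. Put $x=\left(\cos\left(\tfrac{\pi}{2}\alpha\theta_B\right)\right)^{1/\alpha}v$ (for $\alpha\neq1$) and $y=\tfrac{\pi}{2}v+\beta\log\tfrac{\pi}{2}$ (for $\alpha=1$). Then $$ g_{\alpha,d}(v,\beta)=\begin{cases} \mathrm{Re}\ \dfrac{\left(\cos\left(\frac{\pi}{2}\alpha\theta_B\right)\right)^{d/\alpha}}{2^d(\pi i)^{d-1}}\, h^{d-1}(|x|;\alpha,\beta_B^\ast), & \alpha\neq 1,\\[2mm] \mathrm{Re}\ \dfrac{\pi}{4^d i^{d-1}}\, h^{d-1}(y^\ast;1,|\beta|), & \alpha=1, \end{cases} $$ where $\beta_B^\ast=\beta_B\,\mathrm{sign}\,x$ and $y^\ast=y\,\mathrm{sign}\,\beta$, with the convention $\mathrm{sign}(w)=1$ for $w\ge 0$ and $\mathrm{sign}(w)=-1$ for $w<0$.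
   Context: For $0<\alpha<2$, $\beta\in[-1,1]$, integer $d\ge1$ and $v\in\mathbb{R}$ define $$ g_{\alpha,d}(v,\beta)=\begin{cases}\frac{1}{(2\pi)^d}\int_0^\infty \cos\left(vu-\left(\beta\tan\frac{\pi\alpha}{2}\right)u^\alpha\right)u^{d-1}e^{-u^\alpha}\,du, & \alpha\neq1,\\ \frac{1}{(2\pi)^d}\int_0^\infty\cos\left(vu+\frac{2}{\pi}\beta u\log u\right)u^{d-1}e^{-u}\,du, & \alpha=1.\end{cases} $$ Let $K(\alpha)=\alpha-1+\mathrm{sign}(1-\alpha)$ for $\alpha\ne1$. For $\alpha\neq1$ set $\beta_B=\frac{2}{\pi K(\alpha)}\arctan\left(\beta\tan\frac{\pi\alpha}{2}\right)$ and $\theta_B=\beta_BK(\alpha)/\alpha$. For a parameter $\beta\in[-1,1]$ and $\alpha\neq1$ put $\theta=\theta(\beta)=\beta K(\alpha)/\alpha$. For real $z>0$ define $$ \psi(z;\alpha,\beta)=\begin{cases}-z^\alpha\exp\left(-i\frac{\pi}{2}\theta\alpha\right),&\alpha\ne1,\\ -\frac{\pi}{2}z-i\beta z\log z,&\alpha=1,\end{cases} $$ (with $\theta=\beta K(\alpha)/\alpha$ computed from the third argument of $\psi$), and for integer $n\ge0$ and real $x$, $$ h^n(x;\alpha,\beta)=\frac{1}{\pi}\int_0^\infty (iz)^n\exp\left(izx+\psi(z;\alpha,-\beta)\right)dz . $$ *)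

(* Defs.v *)
From Stdlib Require Import Reals.
From Coquelicot Require Import Coquelicot.
Open Scope R_scope.

Definition cexp (z : C) : C := (RtoC (exp (Re z)) * (cos (Im z), sin (Im z)))%C.

Definition int0inf (f : R -> R) : R :=
  RInt_gen f (at_point 0) (Rbar_locally p_infty).
Definition cint0inf (f : R -> C) : C :=
  @RInt_gen C_R_CompleteNormedModule f (at_point 0) (Rbar_locally p_infty).

Definition sgn (w : R) : R := if Rlt_dec w 0 then -1 else 1.

Definition Kal (a : R) : R := a - 1 + sgn (1 - a).

Definition g_ad (a : R) (d : nat) (v b : R) : R :=
  if Req_EM_T a 1 then
    / (2 * PI) ^ d *
    int0inf (fun u => cos (v * u + 2 / PI * b * u * ln u) * u ^ (d - 1) * exp (- u))
  else
    / (2 * PI) ^ d *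
    int0inf (fun u => cos (v * u - (b * tan (PI * a / 2)) * Rpower u a)
                      * u ^ (d - 1) * exp (- Rpower u a)).

Definition beta_B (a b : R) : R := 2 / (PI * Kal a) * atan (b * tan (PI * a / 2)).
Definition theta_B (a b : R) : R := beta_B a b * Kal a / a.
Definition theta (a b : R) : R := b * Kal a / a.

Definition psi (z a b : R) : C :=
  if Req_EM_T a 1 then
    (RtoC (- (PI / 2) * z) - Ci * RtoC (b * z * ln z))%C
  else
    (- RtoC (Rpower z a) * cexp (- (Ci * RtoC (PI / 2 * theta a b * a))))%C.

Definition h (n : nat) (x a b : R) : C :=
  (RtoC (/ PI) * cint0inf (fun z => Cpow (Ci * RtoC z) n *
                                   cexp (Ci * RtoC (z * x) + psi z a (- b))))%C.

(* Main.v *)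
Require Import Defs.
From Stdlib Require Import Reals Lra Lia ZArith.
From Coquelicot Require Import Coquelicot.
Open Scope R_scope.


Lemma is_RInt_gen_pairC (f : R -> C) (lr li : R) :
  is_RInt_gen (fun t => Re (f t)) (at_point 0) (Rbar_locally p_infty) lr ->
  is_RInt_gen (fun t => Im (f t)) (at_point 0) (Rbar_locally p_infty) li ->
  @is_RInt_gen C_R_NormedModule f (at_point 0) (Rbar_locally p_infty) (lr, li).
Proof.
  intros Hr Hi P [eps Heps].
  assert (Fr := Hr (ball lr eps) (locally_ball lr eps)).
  assert (Fi := Hi (ball li eps) (locally_ball li eps)).
  unfold filtermapi in *.
  generalize (filter_and _ _ Fr Fi).
  apply filter_imp. intros [x y] [[yr [H1 H2]] [yi [H3 H4]]].
  exists (yr, yi). split.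
  - apply (is_RInt_fct_extend_pair (U:=R_NormedModule) (V:=R_NormedModule)); assumption.
  - apply Heps. split; assumption.
Qed.

Lemma tail_int (M b1 b2 : R) : 1 <= b1 -> b1 <= b2 ->
  is_RInt (fun z => M / z ^ 2) b1 b2 (M / b1 - M / b2).
Proof.
  intros H1 H2.
  replace (M / b1 - M / b2) with ((fun z => - (M / z)) b2 - (fun z => - (M / z)) b1) by ring.
  apply (is_RInt_derive (fun z => - (M / z))).
  - intros x Hx. rewrite Rmin_left in Hx by lra. rewrite Rmax_right in Hx by lra.
    auto_derive. lra. field. lra.
  - intros x Hx. rewrite Rmin_left in Hx by lra. rewrite Rmax_right in Hx by lra.
    apply (ex_derive_continuous (fun z => M / z ^ 2)). auto_derive. rewrite Rmult_1_r. apply Rmult_integral_contrapositive; split; lra.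
Qed.

Lemma ex_gen_R (f : R -> R) (M : R) :
  (forall z, 0 <= z -> continuous f z) ->
  (forall z, 1 <= z -> Rabs (f z) <= M / z ^ 2) ->
  exists L, is_RInt_gen f (at_point 0) (Rbar_locally p_infty) L.
Proof.
  intros Hc Hb.
  assert (Hex : forall b, 0 <= b -> ex_RInt f 0 b).
  { intros b Hb0. apply (ex_RInt_continuous (V:=R_CompleteNormedModule)). intros z Hz.
    rewrite Rmin_left in Hz by lra. apply Hc. lra. }
  assert (HM : 0 <= M).
  { specialize (Hb 1 (Rle_refl _)). assert (0 <= Rabs (f 1)) by apply Rabs_pos.
    replace (M / 1 ^ 2) with M in Hb by field. lra. }
  destruct (proj1 (filterlim_locally_cauchy (F := Rbar_locally p_infty) (fun b => RInt f 0 b))) as [L HL].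
  - intros eps.
    exists (fun b => M / eps + 1 < b).
    split. { exists (M / eps + 1). tauto. }
    assert (Hpe : 0 < eps) by apply cond_pos.
    assert (Hme : 0 <= M / eps) by (apply Rmult_le_pos; [lra| left; apply Rinv_0_lt_compat; lra]).
    assert (key : forall u v, M / eps + 1 < u -> u <= v -> Rabs (RInt f 0 v - RInt f 0 u) < eps).
    { intros u v Hu Huv.
      assert (Hu0 : 0 <= u) by lra.
      assert (Huv' : ex_RInt f u v).
      { apply (ex_RInt_continuous (V:=R_CompleteNormedModule)); intros z Hz; apply Hc; rewrite Rmin_left in Hz; lra. }
      rewrite <- (RInt_Chasles f 0 u v (Hex u Hu0) Huv').
      replace (plus (RInt f 0 u) (RInt f u v) - RInt f 0 u) with (RInt f u v) by (unfold plus; simpl; lra).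
      apply Rle_lt_trans with (M / u - M / v).
      - apply (norm_RInt_le f (fun z => M / z ^ 2) u v); try lra.
        + intros x Hx. apply Hb. lra.
        + apply (RInt_correct (V:=R_CompleteNormedModule)). exact Huv'.
        + apply tail_int; lra.
      - assert (0 <= M / v) by (apply Rmult_le_pos; [lra| left; apply Rinv_0_lt_compat; lra]).
        assert (M / u < eps).
        { apply Rmult_lt_reg_r with (r := u). lra.
          unfold Rdiv. rewrite Rmult_assoc, Rinv_l, Rmult_1_r by lra.
          apply Rmult_lt_reg_r with (r := / eps). apply Rinv_0_lt_compat; lra.
          rewrite (Rmult_comm eps u), Rmult_assoc, Rinv_r, Rmult_1_r by lra. unfold Rdiv in Hu. lra. }
        lra. }
    intros u v Hu Hv. change (Rabs (RInt f 0 v - RInt f 0 u) < eps).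
    destruct (Rle_dec u v) as [Huv|Huv].
    + apply key; lra.
    + rewrite Rabs_minus_sym. apply key; lra.
  - exists L. intros P HP.
    specialize (HL P HP). destruct HL as [N HN].
    apply Filter_prod with (Q := fun a => a = 0) (R := fun b => Rmax 0 N < b).
    + reflexivity.
    + exists (Rmax 0 N). tauto.
    + intros x y Hx Hy. subst x. exists (RInt f 0 y). split.
      * apply (RInt_correct (V:=R_CompleteNormedModule)). apply Hex. generalize (Rmax_l 0 N). simpl in Hy. lra.
      * apply HN. generalize (Rmax_r 0 N). simpl in Hy. lra.
Qed.

Lemma is_RInt_gen_subst (f : R -> R) (l k : R) : 0 < k ->
  is_RInt_gen f (at_point 0) (Rbar_locally p_infty) l ->
  is_RInt_gen (fun u => f (u / k)) (at_point 0) (Rbar_locally p_infty) (k * l).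
Proof.
  intros Hk H P HP.
  assert (HP' : locally l (fun y => P (k * y))).
  { destruct HP as [eps Heps].
    assert (He : 0 < eps / k) by (apply Rdiv_lt_0_compat; [apply cond_pos|exact Hk]).
    exists (mkposreal _ He). intros y Hy. apply Heps.
    change (Rabs (k * y - k * l) < eps).
    change (Rabs (y - l) < eps / k) in Hy.
    replace (k * y - k * l) with (k * (y - l)) by ring.
    rewrite Rabs_mult, (Rabs_pos_eq k) by lra.
    apply (Rmult_lt_compat_l k) in Hy; [|exact Hk].
    replace (k * (eps / k)) with (pos eps) in Hy by (field; lra). exact Hy. }
  destruct (H _ HP') as [Q R HQ HR HQR].
  destruct HR as [M HM].
  apply Filter_prod with (Q := fun a => Q (a / k)) (R := fun b => R (b / k)).
  - unfold at_point in *. unfold Rdiv. rewrite Rmult_0_l. exact HQ.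
  - exists (k * M). intros x Hx. apply HM.
    apply (Rmult_lt_reg_l k); [exact Hk|]. replace (k * (x / k)) with x by (field; lra). exact Hx.
  - intros x y Hx Hy. destruct (HQR _ _ Hx Hy) as [z [Hz1 Hz2]].
    exists (k * z). split; [|exact Hz2]. simpl in *.
    assert (Hz3 : is_RInt f (/ k * x + 0) (/ k * y + 0) z).
    { replace (/ k * x + 0) with (x / k) by (unfold Rdiv; ring).
      replace (/ k * y + 0) with (y / k) by (unfold Rdiv; ring). exact Hz1. }
    apply is_RInt_comp_lin in Hz3. clear Hz1. rename Hz3 into Hz1.
    apply (is_RInt_scal _ _ _ k) in Hz1.
    eapply is_RInt_ext; [|exact Hz1].
    intros t _. unfold scal; simpl; unfold mult; simpl.
    replace (/ k * t + 0) with (t / k) by (unfold Rdiv; ring). field. lra.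
Qed.

Lemma exp_pow_nat (x : R) (m : nat) : exp (INR m * x) = exp x ^ m.
Proof.
  induction m as [|m IH]. simpl. rewrite Rmult_0_l. apply exp_0.
  rewrite S_INR, Rmult_plus_distr_r, Rmult_1_l, exp_plus, IH. simpl. ring.
Qed.

Lemma exp_ge_pow (t : R) (m : nat) : 0 <= t -> (0 < m)%nat -> (t / INR m) ^ m <= exp t.
Proof.
  intros Ht Hm.
  assert (HmR : 0 < INR m) by (apply lt_0_INR; lia).
  replace t with (INR m * (t / INR m)) at 2 by (field; lra).
  rewrite exp_pow_nat. apply pow_incr. split.
  - apply Rmult_le_pos; [lra| left; apply Rinv_0_lt_compat; lra].
  - assert (0 <= t / INR m) by (apply Rmult_le_pos; [lra| left; apply Rinv_0_lt_compat; lra]).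
    destruct (Req_dec (t / INR m) 0) as [E|E]. rewrite E, exp_0. lra.
    left. apply Rlt_trans with (1 + t / INR m). lra. apply exp_ineq1. lra.
Qed.

Lemma bound_exp (c a : R) (n : nat) : 0 < c -> 0 < a ->
  exists M, 0 <= M /\ forall z, 1 <= z -> z ^ n * exp (- (c * Rpower z a)) <= M / z ^ 2.
Proof.
  intros Hc Ha.
  destruct (archimed ((INR n + 2) / a)) as [Hup _].
  set (m := S (Z.to_nat (up ((INR n + 2) / a)))).
  assert (Hm0 : (0 < m)%nat) by (unfold m; lia).
  assert (HmR : 0 < INR m) by (apply lt_0_INR; lia).
  assert (Hma : INR n + 2 <= a * INR m).
  { assert ((INR n + 2) / a < INR m).
    { unfold m. rewrite S_INR.
      destruct (Z_le_gt_dec 0%Z (up ((INR n + 2) / a))) as [Hz|Hz].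
      - rewrite (INR_IZR_INZ (Z.to_nat _)), Z2Nat.id by exact Hz. lra.
      - assert (Hz2 : (up ((INR n + 2) / a) < 0)%Z) by lia. apply IZR_lt in Hz2. simpl in Hz2. pose proof (pos_INR (Z.to_nat (up ((INR n + 2) / a)))). lra. }
    apply Rmult_lt_compat_l with (r := a) in H; [|lra].
    replace (a * ((INR n + 2) / a)) with (INR n + 2) in H by (field; lra). lra. }
  exists ((INR m / c) ^ m). split.
  { apply pow_le. apply Rmult_le_pos; [lra| left; apply Rinv_0_lt_compat; lra]. }
  intros z Hz.
  assert (Hz0 : 0 < z) by lra.
  assert (Hpa : 0 < Rpower z a) by (unfold Rpower; apply exp_pos).
  set (t := c * Rpower z a).
  assert (Ht : 0 < t) by (unfold t; apply Rmult_lt_0_compat; lra).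
  pose proof (exp_ge_pow t m (Rlt_le _ _ Ht) Hm0) as He.
  assert (Hzp : z ^ (n + 2) <= Rpower z a ^ m).
  { rewrite <- (Rpower_pow m (Rpower z a)) by exact Hpa.
    rewrite Rpower_mult. rewrite <- (Rpower_pow (n+2) z) by exact Hz0.
    apply Rle_Rpower. exact Hz. rewrite plus_INR. replace (INR 2) with 2 by (simpl; ring). lra. }
  assert (Htm : (t / INR m) ^ m = (c / INR m) ^ m * Rpower z a ^ m).
  { unfold t. rewrite <- Rpow_mult_distr. f_equal. field. lra. }
  assert (Hcm : 0 < (c / INR m) ^ m).
  { apply pow_lt. apply Rdiv_lt_0_compat; lra. }
  assert (Hz2 : 0 < z ^ 2) by (apply pow_lt; lra).
  assert (Hzn : 0 < z ^ n) by (apply pow_lt; lra).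
  rewrite exp_Ropp.
  assert (Hexp : 0 < exp t) by apply exp_pos.
  apply Rmult_le_reg_r with (r := exp t * z ^ 2). apply Rmult_lt_0_compat; lra.
  replace (z ^ n * / exp t * (exp t * z ^ 2)) with (z ^ (n + 2)) by (rewrite pow_add; field; lra).
  replace ((INR m / c) ^ m / z ^ 2 * (exp t * z ^ 2)) with ((INR m / c) ^ m * exp t) by (field; lra).
  apply Rle_trans with (Rpower z a ^ m). exact Hzp.
  replace (Rpower z a ^ m) with ((INR m / c) ^ m * ((c / INR m) ^ m * Rpower z a ^ m)).
  2:{ rewrite <- Rmult_assoc, <- Rpow_mult_distr. replace (INR m / c * (c / INR m)) with 1 by (field; lra).
      rewrite pow1. ring. }
  apply Rmult_le_compat_l. apply pow_le. apply Rmult_le_pos; [lra| left; apply Rinv_0_lt_compat; lra].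
  rewrite <- Htm. exact He.
Qed.

Lemma cR_plus (f g : R -> R) x : continuous f x -> continuous g x -> continuous (fun t => f t + g t) x.
Proof. intros. apply (continuous_plus (V:=R_NormedModule)); assumption. Qed.
Lemma cR_minus (f g : R -> R) x : continuous f x -> continuous g x -> continuous (fun t => f t - g t) x.
Proof. intros. apply (continuous_minus (V:=R_NormedModule)); assumption. Qed.
Lemma cR_mult (f g : R -> R) x : continuous f x -> continuous g x -> continuous (fun t => f t * g t) x.
Proof. intros. apply (continuous_mult (K:=R_AbsRing)); assumption. Qed.
Lemma cR_opp (f : R -> R) x : continuous f x -> continuous (fun t => - f t) x.
Proof. intros. apply (continuous_opp (V:=R_NormedModule)); assumption. Qed.
Lemma cR_const (c : R) x : continuous (fun _ : R => c) x.
Proof. apply continuous_const. Qed.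
Lemma cR_id x : continuous (fun t : R => t) x.
Proof. apply continuous_id. Qed.
Lemma cR_exp (f : R -> R) x : continuous f x -> continuous (fun t => exp (f t)) x.
Proof. intros H. apply (continuous_comp f exp x H). apply (ex_derive_continuous (K:=R_AbsRing) (V:=R_NormedModule)). auto_derive. auto. Qed.
Lemma cR_cos (f : R -> R) x : continuous f x -> continuous (fun t => cos (f t)) x.
Proof. intros H. apply (continuous_comp f cos x H). apply (ex_derive_continuous (K:=R_AbsRing) (V:=R_NormedModule)). auto_derive. auto. Qed.
Lemma cR_sin (f : R -> R) x : continuous f x -> continuous (fun t => sin (f t)) x.
Proof. intros H. apply (continuous_comp f sin x H). apply (ex_derive_continuous (K:=R_AbsRing) (V:=R_NormedModule)). auto_derive. auto. Qed.
Lemma cR_pow (f : R -> R) n x : continuous f x -> continuous (fun t => f t ^ n) x.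
Proof. intros H. apply (continuous_comp f (fun u => u ^ n) x H). apply (ex_derive_continuous (K:=R_AbsRing) (V:=R_NormedModule)). auto_derive. auto. Qed.

Definition Pt (a z : R) : R := if Rlt_dec 0 z then Rpower z a else 0.

Lemma Pt_cont (a z : R) : 0 < a -> 0 <= z -> continuous (Pt a) z.
Proof.
  intros Ha Hz. destruct Hz as [Hz|Hz].
  - apply continuous_ext_loc with (g := fun t => Rpower t a).
    + exists (mkposreal z Hz). intros y Hy. change (Rabs (y - z) < z) in Hy.
      unfold Pt. destruct (Rlt_dec 0 y) as [_|H]; [reflexivity|].
      exfalso. apply H. apply Rabs_def2 in Hy. lra.
    + apply continuity_pt_filterlim. apply derivable_continuous_pt.
      exists (a * Rpower z (a - 1)). apply derivable_pt_lim_power. exact Hz.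
  - subst z. apply continuity_pt_filterlim. intros eps Heps.
    exists (Rpower eps (/ a)). split. unfold Rpower; apply exp_pos.
    intros y [_ Hy]. simpl in Hy |- *. unfold R_dist in Hy |- *.
    unfold Pt at 2. destruct (Rlt_dec 0 0) as [H|_]; [lra|].
    unfold Pt. destruct (Rlt_dec 0 y) as [Hy0|Hy0].
    + rewrite Rminus_0_r in *. rewrite Rabs_pos_eq in Hy by lra.
      rewrite Rabs_pos_eq by (left; unfold Rpower; apply exp_pos).
      replace eps with (Rpower (Rpower eps (/ a)) a).
      apply Rlt_Rpower_l; lra.
      rewrite Rpower_mult, Rinv_l, Rpower_1; lra.
    + rewrite Rminus_0_r, Rabs_R0. exact Heps.
Qed.

Lemma ln_lt_self (w : R) : 0 < w -> ln w < w.
Proof.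
  intros Hw. rewrite <- (ln_exp w) at 2. apply ln_increasing. exact Hw.
  apply Rlt_trans with (1 + w). lra. apply exp_ineq1. lra.
Qed.

Lemma xlnx_cont (z : R) : 0 <= z -> continuous (fun t => t * ln t) z.
Proof.
  intros Hz. destruct Hz as [Hz|Hz].
  - apply cR_mult. apply cR_id.
    apply (ex_derive_continuous (K:=R_AbsRing) (V:=R_NormedModule)). exists (/ z). apply is_derive_ln. exact Hz.
  - subst z. apply continuity_pt_filterlim. intros eps Heps.
    exists (Rmin 1 ((eps / 2) ^ 2)). split.
    { apply Rmin_pos. lra. apply pow_lt. lra. }
    intros y [_ Hy]. change (Rabs (y - 0) < Rmin 1 ((eps / 2) ^ 2)) in Hy. change (Rabs (y * ln y - 0 * ln 0) < eps).
    rewrite Rmult_0_l, Rminus_0_r. rewrite Rminus_0_r in Hy.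
    destruct (Rlt_dec 0 y) as [Hy0|Hy0].
    + rewrite Rabs_pos_eq in Hy by lra.
      assert (Hy1 : y < 1) by (generalize (Rmin_l 1 ((eps / 2) ^ 2)); lra).
      assert (Hy2 : y < (eps / 2) ^ 2) by (generalize (Rmin_r 1 ((eps / 2) ^ 2)); lra).
      set (s := sqrt y).
      assert (Hs : 0 < s) by (apply sqrt_lt_R0; lra).
      assert (Hss : s * s = y) by (apply sqrt_sqrt; lra).
      assert (Hse : s < eps / 2).
      { apply Rsqr_incrst_0. unfold Rsqr. rewrite Hss. simpl in Hy2. lra. lra. lra. }
      assert (Hln : ln y = 2 * ln s) by (rewrite <- Hss, ln_mult; lra).
      assert (Hl1 : ln y < 0) by (rewrite <- ln_1; apply ln_increasing; lra).
      assert (Hk : ln (/ s) < / s) by (apply ln_lt_self; apply Rinv_0_lt_compat; lra).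
      rewrite ln_Rinv in Hk by lra.
      rewrite Rabs_left.
      * rewrite Hln, <- Hss.
        replace (- (s * s * (2 * ln s))) with (2 * (s * s) * (- ln s)) by ring.
        apply Rlt_le_trans with (2 * (s * s) * / s).
        apply Rmult_lt_compat_l. nra. exact Hk.
        replace (2 * (s * s) * / s) with (2 * s) by (field; lra). lra.
      * assert (0 < y * (- ln y)) by (apply Rmult_lt_0_compat; lra). lra.
    + assert (ln y = 0) by (unfold ln; destruct (Rlt_dec 0 y); [contradiction|reflexivity]).
      rewrite H, Rmult_0_r, Rabs_R0. exact Heps.
Qed.

Lemma is_RInt_gen_ext_pos {V : NormedModule R_AbsRing} (f g : R -> V) (l : V) :
  (forall x, 0 < x -> f x = g x) ->
  is_RInt_gen f (at_point 0) (Rbar_locally p_infty) l ->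
  is_RInt_gen g (at_point 0) (Rbar_locally p_infty) l.
Proof.
  intros Hfg. apply is_RInt_gen_ext.
  apply Filter_prod with (Q := fun a => a = 0) (R := fun b => 0 < b).
  - reflexivity.
  - exists 0. tauto.
  - intros x y Hx Hy t Ht. simpl in *. subst x. apply Hfg.
    rewrite Rmin_left in Ht by lra. lra.
Qed.

Lemma exp_le_mono (x y : R) : x <= y -> exp x <= exp y.
Proof. intros [H|H]. left. apply exp_increasing. exact H. subst. lra. Qed.

Lemma ex_gen_shape (n : nat) (A : R) (R1 I1 : R -> R) (c0 a0 : R) (g : R -> R) :
  0 < c0 -> 0 < a0 -> 0 <= A ->
  (forall z, 0 <= z -> continuous g z) ->
  (forall z, 1 <= z -> Rabs (g z) <= A * (z ^ n * exp (R1 z))) ->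
  (forall z, 1 <= z -> R1 z <= - (c0 * Rpower z a0)) ->
  exists L, is_RInt_gen g (at_point 0) (Rbar_locally p_infty) L.
Proof.
  intros Hc Ha HA Hg Hb HR.
  destruct (bound_exp c0 a0 n Hc Ha) as [M [HM HMb]].
  apply (ex_gen_R g (A * M)). exact Hg.
  intros z Hz. apply Rle_trans with (1 := Hb z Hz).
  unfold Rdiv. rewrite Rmult_assoc. apply Rmult_le_compat_l. exact HA.
  apply Rle_trans with (z ^ n * exp (- (c0 * Rpower z a0))).
  - apply Rmult_le_compat_l. apply pow_le. lra. apply exp_le_mono. apply HR. exact Hz.
  - apply HMb. exact Hz.
Qed.

Lemma schema (n : nat) (K C0 : C) (r Q E k c0 a0 : R) (R1 I1 : R -> R) (Hf : R -> C) (G : R -> R) :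
  0 < k -> 0 < c0 -> 0 < a0 ->
  (C0 * K)%C = RtoC r ->
  Q * E * k = r ->
  (forall z, 0 <= z -> continuous R1 z) ->
  (forall z, 0 <= z -> continuous I1 z) ->
  (forall z, 1 <= z -> R1 z <= - (c0 * Rpower z a0)) ->
  (forall z, 0 < z -> Hf z = (K * (RtoC (z ^ n * exp (R1 z)) * (cos (I1 z), sin (I1 z))))%C) ->
  (forall u, 0 < u -> G u = E * ((u / k) ^ n * exp (R1 (u / k)) * cos (I1 (u / k)))) ->
  Q * int0inf G = Re (C0 * cint0inf Hf)%C.
Proof.
  intros Hk Hc Ha HCK HQ HR1 HI1 HRb HHf HG.
  set (ps := fun z => z ^ n * exp (R1 z) * cos (I1 z)).
  set (pss := fun z => z ^ n * exp (R1 z) * sin (I1 z)).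
  assert (Hps : forall z, 0 <= z -> continuous ps z).
  { intros z Hz. unfold ps. apply cR_mult. apply cR_mult. apply cR_pow, cR_id.
    apply cR_exp, HR1, Hz. apply cR_cos, HI1, Hz. }
  assert (Hpss : forall z, 0 <= z -> continuous pss z).
  { intros z Hz. unfold pss. apply cR_mult. apply cR_mult. apply cR_pow, cR_id.
    apply cR_exp, HR1, Hz. apply cR_sin, HI1, Hz. }
  assert (Hbd : forall z, 1 <= z -> Rabs (ps z) <= 1 * (z ^ n * exp (R1 z))
                 /\ Rabs (pss z) <= 1 * (z ^ n * exp (R1 z))).
  { intros z Hz. unfold ps, pss. rewrite !Rabs_mult, Rmult_1_l.
    rewrite (Rabs_pos_eq (z ^ n)) by (apply pow_le; lra).
    rewrite (Rabs_pos_eq (exp _)) by (left; apply exp_pos).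
    assert (0 <= z ^ n * exp (R1 z)) by (apply Rmult_le_pos; [apply pow_le; lra| left; apply exp_pos]).
    split; rewrite <- (Rmult_1_r (z ^ n * exp (R1 z))) at 2; apply Rmult_le_compat_l; auto;
      apply Rabs_le; [apply COS_bound | apply SIN_bound]. }
  set (Wr := fun z => Re K * ps z - Im K * pss z).
  set (Wi := fun z => Re K * pss z + Im K * ps z).
  set (A := Rabs (Re K) + Rabs (Im K)).
  assert (HA : 0 <= A) by (unfold A; generalize (Rabs_pos (Re K)) (Rabs_pos (Im K)); lra).
  assert (HWb : forall z, 1 <= z -> Rabs (Wr z) <= A * (z ^ n * exp (R1 z))
                 /\ Rabs (Wi z) <= A * (z ^ n * exp (R1 z))).
  { intros z Hz. destruct (Hbd z Hz) as [B1 B2]. rewrite Rmult_1_l in B1, B2. unfold Wr, Wi, A.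
    split; (eapply Rle_trans; [apply Rabs_triang || apply Rabs_triang|]);
    rewrite ?Rabs_Ropp, !Rabs_mult; rewrite Rmult_plus_distr_r;
    apply Rplus_le_compat; apply Rmult_le_compat_l; auto using Rabs_pos. }
  destruct (ex_gen_shape n 1 R1 I1 c0 a0 ps Hc Ha ltac:(lra) Hps (fun z Hz => proj1 (Hbd z Hz)) HRb) as [Lp HLp].
  destruct (ex_gen_shape n A R1 I1 c0 a0 Wr Hc Ha HA) as [Lr HLr].
  { intros z Hz. unfold Wr. apply cR_minus; apply cR_mult; auto using cR_const. }
  { intros z Hz. apply (proj1 (HWb z Hz)). }
  { exact HRb. }
  destruct (ex_gen_shape n A R1 I1 c0 a0 Wi Hc Ha HA) as [Li HLi].
  { intros z Hz. unfold Wi. apply cR_plus; apply cR_mult; auto using cR_const. }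
  { intros z Hz. apply (proj2 (HWb z Hz)). }
  { exact HRb. }
  assert (HS : @is_RInt_gen C_R_NormedModule Hf (at_point 0) (Rbar_locally p_infty) (Lr, Li)).
  { apply is_RInt_gen_ext_pos with
      (f := fun z => (K * (RtoC (z ^ n * exp (R1 z)) * (cos (I1 z), sin (I1 z))))%C).
    { intros z Hz. symmetry. apply HHf. exact Hz. }
    apply is_RInt_gen_pairC.
    - apply is_RInt_gen_ext_pos with (f := Wr); [|exact HLr].
      intros z _. unfold Wr, ps, pss. simpl. unfold Re, Im. ring.
    - apply is_RInt_gen_ext_pos with (f := Wi); [|exact HLi].
      intros z _. unfold Wi, ps, pss. simpl. unfold Re, Im. ring. }
  assert (Hcint : cint0inf Hf = (Lr, Li)).
  { unfold cint0inf. apply (is_RInt_gen_unique (V:=C_R_CompleteNormedModule)). exact HS. }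
  rewrite Hcint.
  assert (HCK1 : Re C0 * Re K - Im C0 * Im K = r).
  { change (Re (C0 * K)%C = r). rewrite HCK. reflexivity. }
  assert (HCK2 : Re C0 * Im K + Im C0 * Re K = 0).
  { change (Im (C0 * K)%C = 0). rewrite HCK. reflexivity. }
  assert (Hrel : r * Lp = Re C0 * Lr - Im C0 * Li).
  { assert (H1 := is_RInt_gen_scal _ r _ HLp).
    assert (H2 := is_RInt_gen_minus _ _ _ _ (is_RInt_gen_scal _ (Re C0) _ HLr) (is_RInt_gen_scal _ (Im C0) _ HLi)).
    assert (H3 : is_RInt_gen (fun z => scal r (ps z)) (at_point 0) (Rbar_locally p_infty)
                   (minus (scal (Re C0) Lr) (scal (Im C0) Li))).
    { apply is_RInt_gen_ext_pos with (2 := H2). intros z _.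
      unfold Wr, Wi, minus, plus, opp, scal; simpl; unfold mult; simpl.
      rewrite <- HCK1.
      replace (Re C0 * (Re K * ps z - Im K * pss z) + - (Im C0 * (Re K * pss z + Im K * ps z)))
        with ((Re C0 * Re K - Im C0 * Im K) * ps z - (Re C0 * Im K + Im C0 * Re K) * pss z) by ring.
      rewrite HCK2. ring. }
    change (scal r Lp = minus (scal (Re C0) Lr) (scal (Im C0) Li)).
    etransitivity; [symmetry; apply (is_RInt_gen_unique (V:=R_CompleteNormedModule) _ _ H1)|
      apply (is_RInt_gen_unique (V:=R_CompleteNormedModule) _ _ H3)]. }
  assert (HG1 : is_RInt_gen G (at_point 0) (Rbar_locally p_infty) (E * (k * Lp))).
  { assert (H1 := is_RInt_gen_scal _ E _ (is_RInt_gen_subst ps Lp k Hk HLp)).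
    apply is_RInt_gen_ext_pos with (2 := H1). intros u Hu. rewrite HG by exact Hu. reflexivity. }
  unfold int0inf. rewrite (is_RInt_gen_unique (V:=R_CompleteNormedModule) _ _ HG1).
  simpl. unfold Re, Im in Hrel. rewrite <- HQ in Hrel. rewrite <- Hrel. ring.
Qed.

Lemma sgn_sq (w : R) : sgn w * sgn w = 1.
Proof. unfold sgn. destruct (Rlt_dec w 0); ring. Qed.
Lemma Rabs_sgn (w : R) : Rabs w = sgn w * w.
Proof. unfold sgn. destruct (Rlt_dec w 0). rewrite Rabs_left by lra. ring. rewrite Rabs_pos_eq by lra. ring. Qed.
Lemma cos_sgn (w X : R) : cos (sgn w * X) = cos X.
Proof. unfold sgn. destruct (Rlt_dec w 0). replace (-1 * X) with (- X) by ring. apply cos_neg. f_equal; ring. Qed.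
Lemma sin_sgn (w X : R) : sin (sgn w * X) = sgn w * sin X.
Proof. unfold sgn. destruct (Rlt_dec w 0). replace (-1 * X) with (- X) by ring. rewrite sin_neg. ring. rewrite !Rmult_1_l. reflexivity. Qed.

Lemma cexp_eq (w : C) (r0 i0 : R) : Re w = r0 -> Im w = i0 ->
  cexp w = (RtoC (exp r0) * (cos i0, sin i0))%C.
Proof. intros H1 H2. unfold cexp. rewrite H1, H2. reflexivity. Qed.

Lemma Cpow_Ci_z (z : R) (n : nat) : Cpow (Ci * RtoC z) n = (Cpow Ci n * RtoC (z ^ n))%C.
Proof. rewrite Cpow_mult_l, RtoC_pow. reflexivity. Qed.

Lemma RtoC_neq (x : R) : x <> 0 -> RtoC x <> 0%C.
Proof. intros H E. apply (f_equal Re) in E. simpl in E. exact (H E). Qed.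

Theorem proposition1_case_one (b : R) (d : nat) (v : R) : (1 <= d)%nat ->
    let y := PI / 2 * v + b * ln (PI / 2) in
    g_ad 1 d v b =
      Re (RtoC PI / (RtoC (4 ^ d) * Cpow Ci (d - 1))
          * h (d - 1) (y * sgn b) 1 (Rabs b))%C.
Proof.
  intros Hd y.
  assert (HPI := PI_RGT_0).
  set (n := (d - 1)%nat).
  assert (Hdn : d = S n) by (unfold n; lia).
  unfold g_ad. destruct (Req_EM_T 1 1) as [_|H]; [|lra].
  unfold h. rewrite Cmult_assoc.
  set (k := PI / 2).
  set (r := / 4 ^ d).
  apply (schema n (Cpow Ci n) (RtoC PI / (RtoC (4 ^ d) * Cpow Ci n) * RtoC (/ PI))%C
           r (/ (2 * PI) ^ d) ((2 * PI) ^ d * r / k) k (PI / 2) 1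
           (fun z => - (PI / 2 * z)) (fun z => z * (y * sgn b) + Rabs b * (z * ln z))).
  - unfold k; lra.
  - lra.
  - lra.
  - unfold r. rewrite (RtoC_inv (4 ^ d)) by (apply pow_nonzero; lra).
    rewrite (RtoC_inv PI) by lra. field. split; [|split].
    + apply RtoC_neq. apply pow_nonzero. lra.
    + apply RtoC_neq. lra.
    + apply Cpow_nz, Ci_nz.
  - unfold k. field. split. lra. apply pow_nonzero. lra.
  - intros z Hz. apply cR_opp, cR_mult. apply cR_const. apply cR_id.
  - intros z Hz. apply cR_plus. apply cR_mult. apply cR_id. apply cR_const.
    apply cR_mult. apply cR_const. apply xlnx_cont. exact Hz.
  - intros z Hz. rewrite Rpower_1 by lra. lra.
  - intros z Hz. rewrite Cpow_Ci_z. unfold psi. destruct (Req_EM_T 1 1) as [_|H]; [|lra].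
    rewrite (cexp_eq _ (- (PI / 2 * z)) (z * (y * sgn b) + Rabs b * (z * ln z))).
    + rewrite RtoC_mult. ring.
    + simpl. ring.
    + simpl. ring.
  - intros u Hu. unfold r, k.
    assert (Hk : 0 < PI / 2) by lra.
    rewrite Rabs_sgn.
    replace (u / (PI / 2) * (y * sgn b) + sgn b * b * (u / (PI / 2) * ln (u / (PI / 2))))
      with (sgn b * (v * u + 2 / PI * b * u * ln u)).
    2:{ assert (HL : ln (u / (PI / 2)) = ln u - ln (PI / 2)).
        { unfold Rdiv at 1. rewrite ln_mult, ln_Rinv; try lra. apply Rinv_0_lt_compat; lra. }
        rewrite HL. unfold y. field. lra. }
    rewrite cos_sgn. change (d - 1)%nat with n.
    replace (- (PI / 2 * (u / (PI / 2)))) with (- u) by (field; lra).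
    rewrite Hdn. unfold Rdiv. rewrite !Rpow_mult_distr, pow_inv.
    replace 4 with (2 * 2) by ring. rewrite !Rpow_mult_distr, !pow_inv.
    simpl pow. field. repeat split; try apply pow_nonzero; lra.
Qed.

Lemma Kal_nz (a : R) : 0 < a < 2 -> a <> 1 -> Kal a <> 0.
Proof. intros Ha Ha1. unfold Kal, sgn. destruct (Rlt_dec (1 - a) 0); lra. Qed.

Lemma sin_atan_cos (y : R) : sin (atan y) = y * cos (atan y).
Proof. rewrite sin_atan, cos_atan. field. apply Rgt_not_eq, sqrt_lt_R0. pose proof (Rle_0_sqr y). lra. Qed.

Lemma cos_atan_pos (y : R) : 0 < cos (atan y).
Proof. rewrite cos_atan. apply Rdiv_lt_0_compat. lra. apply sqrt_lt_R0. pose proof (Rle_0_sqr y). lra. Qed.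

Theorem proposition1_case_ne (a b : R) (d : nat) (v : R) :
  0 < a < 2 -> (1 <= d)%nat -> a <> 1 ->
    let x := Rpower (cos (PI / 2 * a * theta_B a b)) (/ a) * v in
    g_ad a d v b =
      Re (RtoC (Rpower (cos (PI / 2 * a * theta_B a b)) (INR d / a))
          / (RtoC (2 ^ d) * Cpow (RtoC PI * Ci) (d - 1))
          * h (d - 1) (Rabs x) a (beta_B a b * sgn x))%C.
Proof.
  intros Ha Hd Ha1 x.
  assert (HPI := PI_RGT_0).
  assert (HK := Kal_nz a Ha Ha1).
  set (n := (d - 1)%nat).
  assert (Hdn : d = S n) by (unfold n; lia).
  set (t := tan (PI * a / 2)).
  set (ph := atan (b * t)).
  assert (Hang : PI / 2 * a * theta_B a b = ph).
  { unfold theta_B, beta_B. fold t. fold ph. field. lra. }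
  unfold x in *. clear x. rewrite Hang.
  set (c := cos ph).
  assert (Hc : 0 < c) by apply cos_atan_pos.
  assert (Hsin : sin ph = b * t * c) by apply sin_atan_cos.
  set (k := Rpower c (/ a)).
  assert (Hk : 0 < k) by (unfold k, Rpower; apply exp_pos).
  set (x := k * v).
  set (s := sgn x).
  unfold g_ad. destruct (Req_EM_T a 1) as [H|_]; [lra|].
  unfold h. rewrite Cmult_assoc.
  set (r := Rpower c (INR d / a) / (2 ^ d * PI ^ n) / PI).
  apply (schema n (Cpow Ci n)
           (RtoC (Rpower c (INR d / a)) / (RtoC (2 ^ d) * Cpow (RtoC PI * Ci) n) * RtoC (/ PI))%C
           r (/ (2 * PI) ^ d) ((2 * PI) ^ d * r / k) k c a
           (fun z => - (Pt a z * c)) (fun z => z * Rabs x - s * (Pt a z * sin ph))).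
  - exact Hk.
  - exact Hc.
  - lra.
  - rewrite Cpow_mult_l, <- RtoC_pow.
    assert (E : RtoC r = (RtoC (Rpower c (INR d / a)) / (RtoC (2 ^ d) * RtoC (PI ^ n)) / RtoC PI)%C).
    { unfold r. rewrite (RtoC_div _ PI) by lra. rewrite RtoC_div.
      rewrite RtoC_mult. reflexivity.
      apply Rmult_integral_contrapositive; split; apply pow_nonzero; lra. }
    rewrite E, (RtoC_inv PI) by lra. field.
    repeat split; first [apply Cpow_nz, Ci_nz | apply RtoC_neq; first [lra | apply pow_nonzero; lra]].
  - field. split. lra. apply pow_nonzero. lra.
  - intros z Hz. apply cR_opp, cR_mult. apply Pt_cont; lra. apply cR_const.
  - intros z Hz. apply cR_minus. apply cR_mult. apply cR_id. apply cR_const.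
    apply cR_mult. apply cR_const. apply cR_mult. apply Pt_cont; lra. apply cR_const.
  - intros z Hz. unfold Pt. destruct (Rlt_dec 0 z) as [_|H]; [|lra]. lra.
  - intros z Hz. rewrite Cpow_Ci_z. unfold psi. destruct (Req_EM_T a 1) as [H|_]; [lra|].
    assert (Hth : PI / 2 * theta a (- (beta_B a b * s)) * a = - (s * ph)).
    { unfold theta, beta_B. fold t. fold ph. field. lra. }
    rewrite Hth.
    rewrite (cexp_eq (- (Ci * RtoC (- (s * ph)))) 0 (s * ph)) by (simpl; ring).
    unfold s. rewrite exp_0, cos_sgn, sin_sgn. fold s. fold c.
    rewrite (cexp_eq _ (- (Pt a z * c)) (z * Rabs x - s * (Pt a z * sin ph))).
    + rewrite RtoC_mult. ring.
    + simpl. unfold Pt. destruct (Rlt_dec 0 z); [|lra]. ring.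
    + simpl. unfold Pt. destruct (Rlt_dec 0 z); [|lra]. ring.
  - intros u Hu.
    assert (Huk : 0 < u / k) by (apply Rdiv_lt_0_compat; lra).
    assert (HPt : Pt a (u / k) = Rpower u a / c).
    { unfold Pt. destruct (Rlt_dec 0 (u / k)) as [_|H]; [|lra].
      unfold Rpower at 1. unfold Rdiv at 1. rewrite ln_mult, ln_Rinv; try lra.
      2:{ apply Rinv_0_lt_compat; lra. }
      unfold k. unfold Rpower at 1. rewrite ln_exp.
      replace (a * (ln u + - (/ a * ln c))) with (a * ln u + - ln c) by (field; lra).
      rewrite exp_plus, exp_Ropp, exp_ln by lra. reflexivity. }
    rewrite HPt.
    replace (- (Rpower u a / c * c)) with (- Rpower u a) by (field; lra).
    replace (u / k * Rabs x - s * (Rpower u a / c * sin ph))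
      with (s * (v * u - b * t * Rpower u a)).
    2:{ unfold s. rewrite Rabs_sgn, Hsin. unfold x. field. split; lra. }
    unfold s. rewrite cos_sgn. fold t. change (d - 1)%nat with n.
    assert (Hck : Rpower c (INR d / a) = k ^ d).
    { unfold k. rewrite <- Rpower_pow by (unfold Rpower; apply exp_pos). rewrite Rpower_mult.
      f_equal. field. lra. }
    unfold r. rewrite Hck, Hdn. unfold Rdiv. rewrite !Rpow_mult_distr, !pow_inv.
    simpl pow. field. repeat split; try apply pow_nonzero; lra.
Qed.

Theorem proposition1 (a b : R) (d : nat) (v : R) :
  0 < a < 2 -> -1 <= b <= 1 -> (1 <= d)%nat ->
  (a <> 1 ->
    let x := Rpower (cos (PI / 2 * a * theta_B a b)) (/ a) * v in
    g_ad a d v b =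
      Re (RtoC (Rpower (cos (PI / 2 * a * theta_B a b)) (INR d / a))
          / (RtoC (2 ^ d) * Cpow (RtoC PI * Ci) (d - 1))
          * h (d - 1) (Rabs x) a (beta_B a b * sgn x))%C) /\
  (a = 1 ->
    let y := PI / 2 * v + b * ln (PI / 2) in
    g_ad a d v b =
      Re (RtoC PI / (RtoC (4 ^ d) * Cpow Ci (d - 1))
          * h (d - 1) (y * sgn b) 1 (Rabs b))%C).
Proof.
  intros Ha Hb Hd. split.
  - intros Ha1. apply proposition1_case_ne; assumption.
  - intros Ha1. subst a. apply proposition1_case_one; assumption.
Qed.
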